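(* Let $\mathcal{C}$ be a category and $A$ an object of $\mathcal{C}$ such that $[A,A]=\mathrm{Aut}(A)$ and: (R1) $\mathcal{C}$ has a terminal object and pullbacks; (R'2) $\mathcal{C}$ has quotients of objects by groups acting by automorphisms; (R3) $\mathcal{C}$ has small coproducts; (R'4) $[A,-]$ preserves quotients of objects by groups acting by automorphisms; (R5) $[A,-]$ preserves coproducts; (R6) $[A,-]$ reflects isomorphisms. Let $G=\mathrm{Aut}(A)^{op}$ and $[A,-]_G\colon\mathcal{C}\to\mathcal{E}ns^G$ send $X$ to $[A,X]$ with action $g\cdot x=x\circ g$. Then $[A,-]_G$ has a left adjoint $A\times_G(-)$ and they establish an equivalence of categories $\mathcal{C}\simeq\mathcal{E}ns^G$.
   Context: $\mathcal{E}ns^G$: the category of left $G$-sets. For a group $H$ acting on an object $X$ by automorphisms (homomorphism $H\to\mathrm{Aut}(X)^{op}$), the quotient $q\colon X\to X/H$ is universal among arrows with $q\circ h=q$ for all $h\in H$. ''$[A,-]$ preserves this quotient'' means $[A,X]\to[A,X/H]$, $f\mapsto q\circ f$, is the quotient (orbit set) of $[A,X]$ by the action $f\mapsto h\circ f$ of $H$. *)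

(* Defs.v *)
From Stdlib Require Import ProofIrrelevance FunctionalExtensionality.
Set Implicit Arguments.
Unset Strict Implicit.

Record Category := {
  Obj :> Type;
  Hom : Obj -> Obj -> Type;
  idm : forall a, Hom a a;
  comp : forall a b c, Hom b c -> Hom a b -> Hom a c;
  comp_assoc : forall a b c d (h : Hom c d) (g : Hom b c) (f : Hom a b),
      comp h (comp g f) = comp (comp h g) f;
  comp_id_l : forall a b (f : Hom a b), comp (idm b) f = f;
  comp_id_r : forall a b (f : Hom a b), comp f (idm a) = f
}.
Arguments Hom {c0} _ _.
Arguments idm {c0} a.
Arguments comp {c0 a b c} _ _.
Notation "g \o f" := (comp g f) (at level 40, left associativity).

Section Notions.
Variable C : Category.

Definition is_iso {X Y : C} (f : Hom X Y) : Prop :=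
  exists g : Hom Y X, g \o f = idm X /\ f \o g = idm Y.

Definition is_terminal (T : C) : Prop :=
  forall X : C, exists f : Hom X T, forall g : Hom X T, g = f.

Definition is_pullback {X Y Z P : C} (f : Hom X Z) (g : Hom Y Z)
    (p1 : Hom P X) (p2 : Hom P Y) : Prop :=
  f \o p1 = g \o p2 /\
  forall (W : C) (a : Hom W X) (b : Hom W Y), f \o a = g \o b ->
    exists u : Hom W P, (p1 \o u = a /\ p2 \o u = b) /\
      forall v : Hom W P, p1 \o v = a -> p2 \o v = b -> v = u.

Definition has_terminal : Prop := exists T : C, is_terminal T.

Definition has_pullbacks : Prop :=
  forall (X Y Z : C) (f : Hom X Z) (g : Hom Y Z),
    exists (P : C) (p1 : Hom P X) (p2 : Hom P Y), is_pullback f g p1 p2.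

End Notions.

Record Group := {
  gcar :> Type;
  gmul : gcar -> gcar -> gcar;
  gone : gcar;
  ginv : gcar -> gcar;
  gmulA : forall x y z, gmul x (gmul y z) = gmul (gmul x y) z;
  gmul1 : forall x, gmul gone x = x;
  gmulV : forall x, gmul (ginv x) x = gone
}.
Arguments gmul : clear implicits.
Arguments gone : clear implicits.
Arguments ginv : clear implicits.

Record Action (C : Category) (H : Group) (X : C) := {
  act :> gcar H -> Hom X X;
  act_one : act (gone H) = idm X;
  act_mul : forall g h : gcar H, act (gmul H g h) = act h \o act g
}.
Arguments Action : clear implicits.
Arguments act {C H X} _ _.

Section Notions2.
Variable C : Category.

Definition is_quotient {H : Group} {X Q : C} (a : Action C H X) (q : Hom X Q) : Prop :=
  (forall h, q \o a h = q) /\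
  forall (Y : C) (f : Hom X Y), (forall h, f \o a h = f) ->
    exists u : Hom Q Y, u \o q = f /\ forall v : Hom Q Y, v \o q = f -> v = u.

Definition has_group_quotients : Prop :=
  forall (H : Group) (X : C) (a : Action C H X),
    exists (Q : C) (q : Hom X Q), is_quotient a q.

Definition is_coproduct {I : Type} (X : I -> C) (S : C)
    (inj : forall i, Hom (X i) S) : Prop :=
  forall (Y : C) (f : forall i, Hom (X i) Y),
    exists u : Hom S Y, (forall i, u \o inj i = f i) /\
      forall v : Hom S Y, (forall i, v \o inj i = f i) -> v = u.

Definition has_small_coproducts : Prop :=
  forall (I : Type) (X : I -> C),
    exists (S : C) (inj : forall i, Hom (X i) S), is_coproduct inj.

Definition bijective {U V : Type} (f : U -> V) : Prop :=
  (forall x y, f x = f y -> x = y) /\ (forall y, exists x, f x = y).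

Variable A : C.

(** (R'4) [A,-] preserves quotients: [A,X] -> [A,X/H], x |-> q \o x, is the
    orbit set of [A,X] under x |-> h \o x. *)
Definition homA_preserves_quotients : Prop :=
  forall (H : Group) (X Q : C) (a : Action C H X) (q : Hom X Q),
    is_quotient a q ->
      (forall y : Hom A Q, exists x : Hom A X, q \o x = y) /\
      (forall x x' : Hom A X, q \o x = q \o x' <-> exists h, x' = a h \o x).

Definition homA_preserves_coproducts : Prop :=
  forall (I : Type) (X : I -> C) (S : C) (inj : forall i, Hom (X i) S),
    is_coproduct inj ->
      bijective (fun p : {i : I & Hom A (X i)} => inj (projT1 p) \o projT2 p).

Definition homA_reflects_isos : Prop :=
  forall (X Y : C) (f : Hom X Y), bijective (fun x : Hom A X => f \o x) -> is_iso f.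

End Notions2.

Record Functor (C D : Category) := {
  Fobj :> C -> D;
  Fhom : forall a b, Hom a b -> Hom (Fobj a) (Fobj b);
  Fid : forall a, Fhom (idm a) = idm (Fobj a);
  Fcomp : forall a b c (g : Hom b c) (f : Hom a b),
      Fhom (g \o f) = Fhom g \o Fhom f
}.
Arguments Fhom {C D} f0 {a b} _.

Definition is_adjoint_equivalence {C D : Category} (L : Functor D C) (R : Functor C D)
    (eta : forall Y : D, Hom Y (R (L Y))) (eps : forall X : C, Hom (L (R X)) X) : Prop :=
  (forall (Y Y' : D) (f : Hom Y Y'), Fhom R (Fhom L f) \o eta Y = eta Y' \o f) /\
  (forall (X X' : C) (f : Hom X X'), f \o eps X = eps X' \o Fhom L (Fhom R f)) /\
  (forall X : C, Fhom R (eps X) \o eta (R X) = idm (R X)) /\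
  (forall Y : D, eps (L Y) \o Fhom L (eta Y) = idm (L Y)) /\
  (forall Y : D, is_iso (eta Y)) /\
  (forall X : C, is_iso (eps X)).
Arguments is_adjoint_equivalence {C D} L R eta eps.

(** Under the standing hypothesis [A,A] = Aut(A), the elements of G are the
    arrows A -> A; the product in G is g *_G h = h \o g, so a left action
    satisfies (h \o g) . x = g . (h . x). *)
Section GSets.
Variables (C : Category) (A : C).

Record GSet := {
  gs_car :> Type;
  gs_act : Hom A A -> gs_car -> gs_car;
  gs_act_id : forall x, gs_act (idm A) x = x;
  gs_act_mul : forall g h x, gs_act (h \o g) x = gs_act g (gs_act h x)
}.
Arguments gs_act : clear implicits.

Definition GHom (S T : GSet) : Type :=
  {f : S -> T | forall g x, f (gs_act S g x) = gs_act T g (f x)}.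

Lemma GHom_ext (S T : GSet) (f f' : GHom S T) : proj1_sig f = proj1_sig f' -> f = f'.
Proof.
  destruct f as [f pf], f' as [f' pf']; simpl; intros ->.
  f_equal; apply proof_irrelevance.
Qed.

Definition GHom_id (S : GSet) : GHom S S.
Proof. exists (fun x => x). intros; reflexivity. Defined.

Definition GHom_comp (S T U : GSet) (g : GHom T U) (f : GHom S T) : GHom S U.
Proof.
  exists (fun x => proj1_sig g (proj1_sig f x)).
  intros h x. rewrite (proj2_sig f), (proj2_sig g). reflexivity.
Defined.

Definition GSetCat : Category.
Proof.
  refine (@Build_Category GSet GHom GHom_id GHom_comp _ _ _);
  intros; apply GHom_ext; reflexivity.
Defined.

Definition homA_GSet (X : C) : GSet.
Proof.
  refine (@Build_GSet (Hom A X) (fun g x => x \o g) _ _).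
  - intros x; apply comp_id_r.
  - intros g h x; apply comp_assoc.
Defined.

Definition homA_GHom (X Y : C) (f : Hom X Y) : GHom (homA_GSet X) (homA_GSet Y).
Proof.
  exists (fun x => f \o x). intros g x; simpl. apply comp_assoc.
Defined.

Definition homA_G : Functor C GSetCat.
Proof.
  refine (@Build_Functor C GSetCat homA_GSet homA_GHom _ _).
  - intros a; apply GHom_ext; simpl. apply functional_extensionality; intros x.
    apply comp_id_l.
  - intros a b c g f; apply GHom_ext; simpl. apply functional_extensionality; intros x.
    symmetry; apply comp_assoc.
Defined.
End GSets.

(* Main.v *)
Require Import Defs.
From Stdlib Require Import ClassicalEpsilon FunctionalExtensionality ProofIrrelevance.

Section Main.
Variables (C : Category) (A : C).
Hypothesis hAut : forall f : Hom A A, is_iso f.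
Hypothesis R'2 : has_group_quotients C.
Hypothesis R3 : has_small_coproducts C.
Hypothesis R'4 : homA_preserves_quotients A.
Hypothesis R5 : homA_preserves_coproducts A.
Hypothesis R6 : homA_reflects_isos A.

Definition cid {T : Type} {P : T -> Prop} (h : exists x, P x) : {x | P x} := constructive_indefinite_description P h.

Section Cop.
Variables (I : Type) (X : I -> C) (S : C) (inj : forall i, Hom (X i) S)
  (H : is_coproduct inj).
Definition cmap (Y : C) (f : forall i, Hom (X i) Y) : Hom S Y :=
  proj1_sig (cid (H Y f)).
Lemma cmap_inj Y f i : @cmap Y f \o inj i = f i.
Proof. exact (proj1 (proj2_sig (cid (H Y f))) i). Qed.
Lemma cop_uniq Y (u v : Hom S Y) : (forall i, u \o inj i = v \o inj i) -> u = v.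
Proof.
  intros E.
  pose proof (proj2 (proj2_sig (cid (H Y (fun i => v \o inj i))))) as U.
  rewrite (U u E). symmetry. apply U. intros; reflexivity.
Qed.
End Cop.
Arguments cmap {I X S inj} H {Y} f.
Arguments cmap_inj {I X S inj} H {Y} f i.
Arguments cop_uniq {I X S inj} H {Y} u v _.

Section Quot.
Variables (G : Group) (X Q : C) (a : Action C G X) (q : Hom X Q) (Hq : is_quotient a q).
Definition qmap (Y : C) (f : Hom X Y) (hf : forall h, f \o a h = f) : Hom Q Y :=
  proj1_sig (cid (proj2 Hq Y f hf)).
Lemma qmap_q Y f hf : @qmap Y f hf \o q = f.
Proof. exact (proj1 (proj2_sig (cid (proj2 Hq Y f hf)))). Qed.
Lemma quot_uniq Y (u v : Hom Q Y) : u \o q = v \o q -> u = v.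
Proof.
  intros E.
  assert (hf : forall h, (v \o q) \o a h = v \o q).
  { intros h. rewrite <- comp_assoc, (proj1 Hq h). reflexivity. }
  pose proof (proj2 (proj2_sig (cid (proj2 Hq Y (v \o q) hf)))) as U.
  rewrite (U u E). symmetry. apply U. reflexivity.
Qed.
End Quot.
Arguments qmap {G X Q a q} Hq {Y} f hf.
Arguments qmap_q {G X Q a q} Hq {Y} f hf.
Arguments quot_uniq {G X Q a q} Hq {Y} u v _.

Definition inv (f : Hom A A) : Hom A A := proj1_sig (cid (hAut f)).
Lemma inv_l f : inv f \o f = idm A.
Proof. exact (proj1 (proj2_sig (cid (hAut f)))). Qed.
Lemma inv_r f : f \o inv f = idm A.
Proof. exact (proj2 (proj2_sig (cid (hAut f)))). Qed.
Lemma inv_unique f k : k \o f = idm A -> k = inv f.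
Proof.
  intros E. rewrite <- (comp_id_r k), <- (inv_r f), comp_assoc, E, comp_id_l.
  reflexivity.
Qed.
Lemma inv_id : inv (idm A) = idm A.
Proof. symmetry. apply inv_unique. apply comp_id_l. Qed.
Lemma inv_comp h g : inv (h \o g) = inv g \o inv h.
Proof.
  symmetry. apply inv_unique.
  rewrite <- comp_assoc, (comp_assoc (inv h)), inv_l, comp_id_l. apply inv_l.
Qed.

Definition Gop : Group.
Proof.
  refine (@Build_Group (Hom A A) (fun g h => h \o g) (idm A) inv _ _ _).
  - intros; simpl. symmetry. apply comp_assoc.
  - intros; apply comp_id_r.
  - intros; apply inv_r.
Defined.

Definition copS (Y : GSet A) : C := proj1_sig (cid (R3 (gs_car Y) (fun _ => A))).
Definition copI (Y : GSet A) : forall y : Y, Hom A (copS Y) :=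
  proj1_sig (cid (proj2_sig (cid (R3 (gs_car Y) (fun _ => A))))).
Lemma copH Y : is_coproduct (copI Y).
Proof. exact (proj2_sig (cid (proj2_sig (cid (R3 (gs_car Y) (fun _ => A)))))). Qed.

Lemma cmapY_inj (Y : GSet A) (Z : C) (f : forall y : Y, Hom A Z) (y : Y) :
  cmap (copH Y) f \o copI Y y = f y.
Proof. exact (cmap_inj (copH Y) f y). Qed.

Definition actf (Y : GSet A) (h : Hom A A) : Hom (copS Y) (copS Y) :=
  cmap (copH Y) (fun y => copI Y (gs_act (inv h) y) \o h).

Lemma actf_inj Y h y : actf Y h \o copI Y y = copI Y (gs_act (inv h) y) \o h.
Proof. unfold actf. exact (cmap_inj (copH Y) _ y). Qed.

Definition actY (Y : GSet A) : Action C Gop (copS Y).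
Proof.
  refine (@Build_Action C Gop (copS Y) (actf Y) _ _).
  - apply (cop_uniq (copH Y)); intros y. simpl.
    rewrite actf_inj, inv_id, gs_act_id, comp_id_r, comp_id_l. reflexivity.
  - intros g h. simpl. apply (cop_uniq (copH Y)); intros y.
    change (gcar Gop) with (Hom A A) in g, h.
    rewrite (actf_inj Y (h \o g)), <- comp_assoc, (actf_inj Y g).
    rewrite (comp_assoc (actf Y h)), (actf_inj Y h).
    rewrite inv_comp, gs_act_mul, comp_assoc. reflexivity.
Defined.

Definition LQ (Y : GSet A) : C := proj1_sig (cid (R'2 Gop (copS Y) (actY Y))).
Definition Lq (Y : GSet A) : Hom (copS Y) (LQ Y) :=
  proj1_sig (cid (proj2_sig (cid (R'2 Gop (copS Y) (actY Y))))).
Lemma LqH Y : is_quotient (actY Y) (Lq Y).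
Proof. exact (proj2_sig (cid (proj2_sig (cid (R'2 Gop (copS Y) (actY Y)))))). Qed.

Definition eta0 (Y : GSet A) (y : Y) : Hom A (LQ Y) := Lq Y \o copI Y y.

Lemma K1 Y Z (u v : Hom (LQ Y) Z) :
  (forall y, u \o eta0 Y y = v \o eta0 Y y) -> u = v.
Proof.
  intros E. apply (quot_uniq (LqH Y)). apply (cop_uniq (copH Y)).
  intros y. rewrite <- !comp_assoc. apply E.
Qed.

Lemma K2 Y g y : eta0 Y (gs_act g y) = eta0 Y y \o g.
Proof.
  unfold eta0.
  assert (E : actf Y g \o copI Y (gs_act g y) = copI Y y \o g).
  { rewrite actf_inj, <- gs_act_mul, inv_r, gs_act_id. reflexivity. }
  rewrite <- comp_assoc, <- E, comp_assoc.
  pose proof (proj1 (LqH Y) g) as Hg. simpl in Hg. rewrite Hg. reflexivity.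
Qed.

Lemma K3 Y y y' : eta0 Y y = eta0 Y y' -> y = y'.
Proof.
  intros E. unfold eta0 in E.
  destruct (proj1 (proj2 (R'4 _ _ _ _ _ (LqH Y)) _ _) E) as [h Eh]. simpl in Eh.
  rewrite actf_inj in Eh.
  assert (Ex : existT (fun y => Hom A A) y' (idm A) = existT _ (gs_act (inv h) y) h).
  { apply (proj1 (R5 _ _ _ _ (copH Y))). simpl. rewrite comp_id_r. exact Eh. }
  apply (f_equal (fun p : {_ : gs_car Y & Hom A A} => gs_act (projT2 p) (projT1 p))) in Ex. simpl in Ex.
  rewrite gs_act_id, <- gs_act_mul, inv_l, gs_act_id in Ex. symmetry; exact Ex.
Qed.

Lemma K4 Y (x : Hom A (LQ Y)) : exists y, eta0 Y y = x.
Proof.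
  destruct (proj1 (R'4 _ _ _ _ _ (LqH Y)) x) as [x0 E0].
  destruct (proj2 (R5 _ _ _ _ (copH Y)) x0) as [[y f] Ef]. simpl in Ef.
  exists (gs_act f y). rewrite K2. unfold eta0.
  rewrite <- comp_assoc, Ef. exact E0.
Qed.

Section LmapS.
Variables (Y Y' : GSet A) (phi : GHom Y Y').
Definition mY : Hom (copS Y) (LQ Y') :=
  cmap (copH Y) (fun y => eta0 Y' (proj1_sig phi y)).
Lemma mY_inv : forall h, mY \o (actY Y) h = mY.
Proof.
  intros h. simpl. apply (cop_uniq (copH Y)). intros y.
  unfold mY. rewrite <- comp_assoc, actf_inj, comp_assoc, !cmapY_inj.
  rewrite <- K2, <- (proj2_sig phi), <- gs_act_mul, inv_l, gs_act_id. reflexivity.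
Qed.
Definition Lmap : Hom (LQ Y) (LQ Y') := qmap (LqH Y) mY mY_inv.
Lemma Lmap_eta y : Lmap \o eta0 Y y = eta0 Y' (proj1_sig phi y).
Proof.
  unfold Lmap, eta0. rewrite comp_assoc, qmap_q. unfold mY. rewrite cmapY_inj.
  reflexivity.
Qed.
End LmapS.

Definition LF : Functor (GSetCat A) C.
Proof.
  refine (@Build_Functor (GSetCat A) C LQ Lmap _ _).
  - intros Y. apply K1. intros y. rewrite Lmap_eta, comp_id_l. reflexivity.
  - intros Y1 Y2 Y3 g f. apply K1. intros y.
    rewrite <- comp_assoc, !Lmap_eta. reflexivity.
Defined.

Section EpsS.
Variable X : C.
Definition eY : Hom (copS (homA_GSet A X)) X :=
  cmap (copH (homA_GSet A X)) (fun x => x).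
Lemma eY_inv : forall h, eY \o (actY (homA_GSet A X)) h = eY.
Proof.
  intros h. simpl. apply (cop_uniq (copH _)). intros x.
  unfold eY. rewrite <- comp_assoc, actf_inj, comp_assoc, !cmapY_inj. simpl.
  rewrite <- comp_assoc, inv_l, comp_id_r. reflexivity.
Qed.
Definition eps : Hom (LQ (homA_GSet A X)) X := qmap (LqH _) eY eY_inv.
Lemma eps_eta x : eps \o eta0 (homA_GSet A X) x = x.
Proof.
  unfold eps, eta0. rewrite comp_assoc, qmap_q. unfold eY. rewrite cmapY_inj.
  reflexivity.
Qed.
End EpsS.

Definition etaG (Y : GSet A) : GHom Y (homA_GSet A (LQ Y)).
Proof. exists (eta0 Y). intros g y. simpl. apply K2. Defined.

Definition etainvf Y (x : Hom A (LQ Y)) : Y := proj1_sig (cid (K4 Y x)).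
Lemma etainvf_spec Y x : eta0 Y (etainvf Y x) = x.
Proof. exact (proj2_sig (cid (K4 Y x))). Qed.

Definition etainv (Y : GSet A) : GHom (homA_GSet A (LQ Y)) Y.
Proof.
  exists (etainvf Y). intros g x. simpl. apply K3.
  rewrite K2, !etainvf_spec. reflexivity.
Defined.

Lemma main_thm :
  exists (L : Functor (GSetCat A) C)
         (eta : forall Y : GSetCat A, Hom Y (homA_G A (L Y)))
         (eps : forall X : C, Hom (L (homA_G A X)) X),
    is_adjoint_equivalence L (homA_G A) eta eps.
Proof.
  exists LF, etaG, eps.
  split; [|split; [|split; [|split; [|split]]]].
  - intros Y Y' f. apply GHom_ext. simpl. apply functional_extensionality.
    intros y. apply Lmap_eta.
  - intros X X' f. simpl. apply K1. intros x.
    rewrite <- !comp_assoc, Lmap_eta, eps_eta. simpl. rewrite eps_eta. reflexivity.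
  - intros X. apply GHom_ext. simpl. apply functional_extensionality.
    intros x. apply eps_eta.
  - intros Y. simpl. apply K1. intros y.
    rewrite <- comp_assoc, Lmap_eta, comp_id_l. simpl. apply eps_eta.
  - intros Y. exists (etainv Y). split.
    + apply GHom_ext. simpl. apply functional_extensionality. intros y.
      apply K3. apply etainvf_spec.
    + apply GHom_ext. simpl. apply functional_extensionality. intros x.
      apply etainvf_spec.
  - intros X. apply R6. split.
    + intros x x' E.
      destruct (K4 _ x) as [y <-]. destruct (K4 _ x') as [y' <-].
      simpl in E. rewrite !eps_eta in E. subst. reflexivity.
    + intros y. exists (eta0 (homA_GSet A X) y). apply eps_eta.
Qed.
End Main.

Theorem theorem5p17 (C : Category) (A : C)
  (hAut : forall f : Hom A A, is_iso f)                   (* [A,A] = Aut(A) *)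
  (R1 : has_terminal C /\ has_pullbacks C)
  (R'2 : has_group_quotients C)
  (R3 : has_small_coproducts C)
  (R'4 : homA_preserves_quotients A)
  (R5 : homA_preserves_coproducts A)
  (R6 : homA_reflects_isos A) :
  exists (L : Functor (GSetCat A) C)
         (eta : forall Y : GSetCat A, Hom Y (homA_G A (L Y)))
         (eps : forall X : C, Hom (L (homA_G A X)) X),
    is_adjoint_equivalence L (homA_G A) eta eps.
Proof.
  exact (@main_thm C A hAut R'2 R3 R'4 R5 R6).
Qed.
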